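(* For all $m,n\in\mathbf{N}_0$, $$ \left[{n+m+1}\atop{m+1}\right]_q=\sum_{j=0}^{n}q^{(m+1)j}\left[{n+m-j}\atop{m}\right]_q, $$ $$ \left[{n+m+2}\atop{m+2}\right]_q=\frac12\sum_{\substack{j,k\ge 0\\ j+k\le n}}\left[{n+m-j-k}\atop{m}\right]_q\,q^{\,n-(j+k)}\left(q^{(m+2)j}+q^{(m+2)k}\right). $$
   Context: Here $q$ is a variable (e.g. $0<q<1$), $(q)_j:=(1-q)(1-q^2)\cdots(1-q^j)$ for $j\in\mathbf{N}$, $(q)_0:=1$, and $\left[{n}\atop{k}\right]_q:=\dfrac{(q)_n}{(q)_k\,(q)_{n-k}}$ denotes the $q$-binomial coefficient (Gaussian polynomial) for integers $0\le k\le n$. $\mathbf{N}_0=\{0,1,2,\dots\}$. *)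

(* Defs.v *)
From mathcomp Require Import all_boot all_order all_algebra.
Set Implicit Arguments. Unset Strict Implicit. Unset Printing Implicit Defensive.
Import Order.TTheory GRing.Theory Num.Theory.
Local Open Scope ring_scope.

Definition qpoch (R : ringType) (q : R) (j : nat) : R :=
  \prod_(1 <= i < j.+1) (1 - q ^+ i).

(* Gaussian binomial [n k]_q := (q)_n / ((q)_k (q)_(n-k)), used for k <= n *)
Definition qbinom (R : fieldType) (q : R) (n k : nat) : R :=
  qpoch q n / (qpoch q k * qpoch q (n - k)).

(* Main.v *)
Require Import Defs.
From mathcomp Require Import all_boot all_order all_algebra.
From mathcomp Require Import zify ring lra.
Import Order.TTheory GRing.Theory Num.Theory.
Local Open Scope ring_scope.

Section S.
Variables (R : realFieldType) (q : R) (hq0 : 0 < q) (hq1 : q < 1).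

Lemma qpochS n : qpoch q n.+1 = qpoch q n * (1 - q ^+ n.+1).
Proof. by rewrite /qpoch big_nat_recr. Qed.

Lemma qpoch_neq0 n : qpoch q n != 0.
Proof.
elim: n => [|n IH]; first by rewrite /qpoch big_geq // oner_neq0.
rewrite qpochS mulf_neq0 // subr_eq0 eq_sym lt_eqF //.
by rewrite exprn_ilt1 // ltW.
Qed.

Lemma qpow_lt1 n : q ^+ n.+1 < 1.
Proof. by rewrite exprn_ilt1 // ltW. Qed.

Lemma pascal1 a b : qbinom q (a+b+2) (a+1)
  = q ^+ (a+1) * qbinom q (a+b+1) (a+1) + qbinom q (a+b+1) a.
Proof.
rewrite /qbinom.
have -> : (a + b + 2 - (a + 1) = b.+1)%N by lia.
have -> : (a + b + 1 - (a + 1) = b)%N by lia.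
have -> : (a + b + 1 - a = b.+1)%N by lia.
have -> : (a + b + 2 = (a+b+1).+1)%N by lia.
rewrite !addn1 !qpochS.
have e : q ^+ (a + b).+2 = q ^+ a.+1 * q ^+ b.+1 by rewrite -exprD; congr (_ ^+ _); lia.
rewrite e.
have h1 := qpoch_neq0 a. have h2 := qpoch_neq0 b. have h3 := qpoch_neq0 (a+b).+1.
have h4 : 1 - q ^+ a.+1 != 0 by rewrite subr_eq0 eq_sym lt_eqF // qpow_lt1.
have h5 : 1 - q ^+ b.+1 != 0 by rewrite subr_eq0 eq_sym lt_eqF // qpow_lt1.
field; rewrite ?h1 ?h2 ?h3 ?h4 ?h5 //.
Qed.

Lemma pascal2 a b : qbinom q (a+b+2) (a+1)
  = qbinom q (a+b+1) (a+1) + q ^+ b.+1 * qbinom q (a+b+1) a.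
Proof.
rewrite /qbinom.
have -> : (a + b + 2 - (a + 1) = b.+1)%N by lia.
have -> : (a + b + 1 - (a + 1) = b)%N by lia.
have -> : (a + b + 1 - a = b.+1)%N by lia.
have -> : (a + b + 2 = (a+b+1).+1)%N by lia.
rewrite !addn1 !qpochS.
have e : q ^+ (a + b).+2 = q ^+ a.+1 * q ^+ b.+1 by rewrite -exprD; congr (_ ^+ _); lia.
rewrite e.
have h1 := qpoch_neq0 a. have h2 := qpoch_neq0 b. have h3 := qpoch_neq0 (a+b).+1.
have h4 : 1 - q ^+ a.+1 != 0 by rewrite subr_eq0 eq_sym lt_eqF // qpow_lt1.
have h5 : 1 - q ^+ b.+1 != 0 by rewrite subr_eq0 eq_sym lt_eqF // qpow_lt1.
field; rewrite ?h1 ?h2 ?h3 ?h4 ?h5 //.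
Qed.

Lemma qbinom_nn m : qbinom q m m = 1.
Proof. have h0 : qpoch q 0 = 1 by rewrite /qpoch big_geq. by rewrite /qbinom subnn h0 mulr1 divff // qpoch_neq0. Qed.

Lemma identA m n : qbinom q (n+m+1) (m+1)
   = \sum_(j < n.+1) q ^+ ((m + 1) * j) * qbinom q (n + m - j) m.
Proof.
elim: n => [|n IH].
  by rewrite big_ord1 /= add0n muln0 expr0 mul1r subn0 addn1 !qbinom_nn.
have -> : (n.+1 + m + 1 = m + n + 2)%N by lia.
rewrite pascal1 big_ord_recl /= muln0 expr0 mul1r subn0.
have -> : (m + n + 1 = n + m + 1)%N by lia.
rewrite IH mulr_sumr addrC; congr (_ + _); first by rewrite addn1 addSn.
apply: eq_bigr => i _; rewrite mulrA -exprD; congr (_ ^+ _ * qbinom _ _ _); rewrite /bump /=; lia.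
Qed.

Lemma identB m n : qbinom q (n+m+1) (m+1)
   = \sum_(k < n.+1) q ^+ (n - k) * qbinom q (n + m - k) m.
Proof.
elim: n => [|n IH].
  by rewrite big_ord1 /= add0n expr0 mul1r subn0 addn1 !qbinom_nn.
have -> : (n.+1 + m + 1 = m + n + 2)%N by lia.
rewrite pascal2 big_ord_recl /= subn0.
have -> : (m + n + 1 = n + m + 1)%N by lia.
rewrite IH addrC; congr (_ + _); first by rewrite addn1 addSn.
Qed.
End S.

Theorem theorem2p3 (R : realFieldType) (q : R) (hq0 : 0 < q) (hq1 : q < 1)
  (m n : nat) :
  qbinom q (n + m + 1) (m + 1)
    = \sum_(j < n.+1) q ^+ ((m + 1) * j) * qbinom q (n + m - j) m
  /\
  qbinom q (n + m + 2) (m + 2)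
    = 2^-1 * \sum_(j < n.+1) \sum_(k < n.+1 | (j + k <= n)%N)
        qbinom q (n + m - j - k) m * q ^+ (n - (j + k))
          * (q ^+ ((m + 2) * j) + q ^+ ((m + 2) * k)).
Proof.
split; first exact: identA.
pose F := fun j k : nat => qbinom q (n + m - j - k) m * q ^+ (n - (j + k)).
have FC j k : F j k = F k j by rewrite /F; f_equal; [congr (qbinom _ _ _); lia | congr (_ ^+ _); lia].
set S := \sum_(j < n.+1) \sum_(k < n.+1 | (j + k <= n)%N) F j k * q ^+ ((m + 2) * j).
set S' := \sum_(j < n.+1) \sum_(k < n.+1 | (j + k <= n)%N) F j k * q ^+ ((m + 2) * k).
have e1 : \sum_(j < n.+1) \sum_(k < n.+1 | (j + k <= n)%N)
        qbinom q (n + m - j - k) m * q ^+ (n - (j + k))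
          * (q ^+ ((m + 2) * j) + q ^+ ((m + 2) * k)) = S + S'.
  rewrite /S /S' -big_split /=; apply: eq_bigr => j _.
  rewrite -big_split /=; apply: eq_bigr => k _; by rewrite /F mulrDr.
have e2 : S' = S.
  rewrite /S /S'.
  under eq_bigr => j _ do rewrite big_mkcond.
  rewrite exchange_big /=; apply: eq_bigr => k _.
  rewrite [RHS]big_mkcond; apply: eq_bigr => j _ /=.
  by rewrite addnC (FC j k).
rewrite e1 e2.
have -> : 2^-1 * (S + S) = S by field.
have := @identA R q hq0 hq1 (m + 1) n.
have -> : (n + (m + 1) + 1 = n + m + 2)%N by lia.
have -> : (m + 1 + 1 = m + 2)%N by lia.
move=> ->; rewrite /S; apply: eq_bigr => j _.
rewrite -mulr_suml mulrC; congr (_ * _).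
have hj : (j <= n)%N by rewrite -ltnS.
have -> : (n + (m + 1) - j = (n - j) + m + 1)%N by lia.
rewrite (@identB R q hq0 hq1 m (n - j)).
rewrite (big_ord_widen n.+1 (fun k : nat => q ^+ (n - j - k) * qbinom q (n - j + m - k) m)) ?ltnS ?leq_subr //.
apply: eq_big => k /=.
  by apply/idP/idP; lia.
move=> _; rewrite /F mulrC; congr (qbinom _ _ _ * _ ^+ _); lia.
Qed.
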